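(* The correspondence $\underline\nu^*:\mathbf S^k_{++}\rightrightarrows K$, $A\mapsto\operatorname{argmin}_{\underline\nu\in K}F(\underline\nu,A)$, is upper hemicontinuous. Consequently, if $\underline\nu^*(A^* )=\{\underline\nu^0\}$ is a singleton and $A^{(N)}\to A^*$ in $\mathbf S^k_{++}$, then for every $\varepsilon>0$ there is $N_0$ such that $\|\underline\nu-\underline\nu^0\|<\varepsilon$ whenever $\underline\nu\in\underline\nu^*(A^{(N)})$ and $N\ge N_0$.
   Context: $\mathbf S^k_{++}$ is the set of $k\times k$ symmetric positive-definite matrices. $\mathcal I$ is a collection of nonempty subsets of $\{1,\dots,k\}$, $a\in\mathbb{R}^k\setminus\{0\}$ with $\operatorname{supp}(a)\subseteq\bigcup\mathcal I$. $P_I:\mathbb{R}^k\to\mathbb{R}^{|I|}$ is the coordinate projection onto $I$, and for $A\in\mathbf S^k_{++}$, $A_I^\dagger:=P_I^\top(P_IAP_I^\top)^{-1}P_I$. Costs $c_I\in\mathbb{R}^m_{\ge0}$, each with at least one positive coordinate, and $B_0\in\mathbb{R}^m_{>0}$; vector inequalities componentwise. $K=\{\underline\nu\in\mathbb{R}^{\mathcal I}:\underline\nu\ge0,\ \sum_I\nu_Ic_I\le B_0\}$ (compact). $F(\underline\nu,A)=a^\top(\sum_I\nu_IA_I^\dagger)^\dagger a$ if $a\in\operatorname{range}(\sum_I\nu_IA_I^\dagger)$ and $F(\underline\nu,A)=\infty$ otherwise; $\dagger$ denotes the Moore–Penrose pseudo-inverse. *)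

(* Defs.v *)
From HB Require Import structures.
From mathcomp Require Import all_boot all_order all_algebra.
From mathcomp Require Import all_classical all_reals all_analysis.
Set Implicit Arguments. Unset Strict Implicit. Unset Printing Implicit Defensive.
Import Order.TTheory GRing.Theory Num.Theory.
Import numFieldNormedType.Exports.
Local Open Scope classical_set_scope.
Local Open Scope ring_scope.

Section Defs.
Variable R : realType.

Definition spd (k : nat) (A : 'M[R]_k) : Prop :=
  A^T = A /\ forall x : 'cV[R]_k, x != 0 -> 0 < (x^T *m A *m x) 0 0.

(* coordinate projection P_I : R^k -> R^{|I|} (coordinates of I in enum order) *)
Definition coordproj (k : nat) (I : {set 'I_k}) : 'M[R]_(#|I|, k) :=
  \matrix_(r < #|I|, j < k) (j == @enum_val _ (mem I) r)%:R.

Definition Adag (k : nat) (A : 'M[R]_k) (I : {set 'I_k}) : 'M[R]_k :=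
  (coordproj I)^T *m invmx (coordproj I *m A *m (coordproj I)^T) *m coordproj I.

Definition penrose (k : nat) (M X : 'M[R]_k) : Prop :=
  [/\ M *m X *m M = M, X *m M *m X = X,
      (M *m X)^T = M *m X & (X *m M)^T = X *m M].

Definition mp_pinv (k : nat) (M : 'M[R]_k) : 'M[R]_k :=
  xget 0 [set X | penrose M X].

(* M := sum_I nu_I A_I^dagger, with collection indexed by 'I_n via I *)
Definition Msum (k n : nat) (I : 'I_n -> {set 'I_k}) (nu : 'rV[R]_n)
    (A : 'M[R]_k) : 'M[R]_k :=
  \sum_(i < n) nu 0 i *: Adag A (I i).

Definition Fobj (k n : nat) (I : 'I_n -> {set 'I_k}) (a : 'cV[R]_k)
    (nu : 'rV[R]_n) (A : 'M[R]_k) : \bar R :=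
  let M := Msum I nu A in
  if `[< exists x : 'cV[R]_k, M *m x = a >]
  then ((a^T *m mp_pinv M *m a) 0 0)%:E
  else +oo%E.

Definition Kset (m n : nat) (c : 'I_n -> 'cV[R]_m) (B0 : 'cV[R]_m)
  : set 'rV[R]_n :=
  [set nu | (forall i, 0 <= nu 0 i) /\
            (forall j, (\sum_(i < n) nu 0 i *: c i) j 0 <= B0 j 0)].

Definition nustar (k m n : nat) (I : 'I_n -> {set 'I_k}) (a : 'cV[R]_k)
    (c : 'I_n -> 'cV[R]_m) (B0 : 'cV[R]_m) (A : 'M[R]_k) : set 'rV[R]_n :=
  [set nu | Kset c B0 nu /\
            forall nu', Kset c B0 nu' -> (Fobj I a nu A <= Fobj I a nu' A)%E].

End Defs.

(* Main.v *)
Require Import Defs.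
From HB Require Import structures.
From mathcomp Require Import all_boot all_order all_algebra.
From mathcomp Require Import all_classical all_reals all_analysis.
From mathcomp Require Import ring lra.
Import Order.TTheory GRing.Theory Num.Theory.
Import numFieldNormedType.Exports.
Local Open Scope classical_set_scope.
Local Open Scope ring_scope.

Set Implicit Arguments. Unset Strict Implicit. Unset Printing Implicit Defensive.

Definition mxlim (R : realType) (T : Type) (F : set_system T) (p q : nat)
  (f : T -> 'M[R]_(p, q)) (L : 'M[R]_(p, q)) :=
  forall i j, f x i j @[x --> F] --> L i j.

Lemma cvg_sumR (R : realType) (T : Type) (F : set_system T) (FF : Filter F)
  (I : Type) (r : seq I) (P : pred I) (g : I -> T -> R) (l : I -> R) :
  (forall i, P i -> g i x @[x --> F] --> l i) ->
  \sum_(i <- r | P i) g i x @[x --> F] --> \sum_(i <- r | P i) l i.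
Proof.
move=> h; apply: (@cvg_big R I +%R 0 P _ _ F r g l FF) => //.
exact: add_continuous.
Qed.

Lemma cvg_prodR (R : realType) (T : Type) (F : set_system T) (FF : Filter F)
  (I : Type) (r : seq I) (P : pred I) (g : I -> T -> R) (l : I -> R) :
  (forall i, P i -> g i x @[x --> F] --> l i) ->
  \prod_(i <- r | P i) g i x @[x --> F] --> \prod_(i <- r | P i) l i.
Proof.
move=> h; apply: (@cvg_big R I *%R 1 P _ _ F r g l FF) => //.
exact: mul_continuous.
Qed.

Lemma mxlim_cst (R : realType) T (F : set_system T) (FF : Filter F) p q
  (L : 'M[R]_(p, q)) : mxlim F (fun _ => L) L.
Proof. by move=> i j; exact: cvg_cst. Qed.

Lemma mxlim_add (R : realType) T (F : set_system T) (FF : Filter F) p q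
  (f g : T -> 'M[R]_(p, q)) L M : mxlim F f L -> mxlim F g M ->
  mxlim F (fun x => f x + g x) (L + M).
Proof.
move=> hf hg i j; rewrite mxE.
under eq_cvg do rewrite mxE.
exact: cvgD.
Qed.

Lemma mxlim_mul (R : realType) T (F : set_system T) (FF : Filter F) p q s
  (f : T -> 'M[R]_(p, q)) (g : T -> 'M[R]_(q, s)) L M :
  mxlim F f L -> mxlim F g M -> mxlim F (fun x => f x *m g x) (L *m M).
Proof.
move=> hf hg i j; rewrite mxE.
under eq_cvg do rewrite mxE.
apply: cvg_sumR => l _; exact: cvgM.
Qed.

Lemma mxlim_tr (R : realType) T (F : set_system T) (FF : Filter F) p q
  (f : T -> 'M[R]_(p, q)) L : mxlim F f L -> mxlim F (fun x => (f x)^T) L^T.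
Proof.
move=> hf i j; rewrite mxE.
under eq_cvg do rewrite mxE.
exact: hf.
Qed.

Lemma mxlim_scale (R : realType) T (F : set_system T) (FF : Filter F) p q
  (c : T -> R) (f : T -> 'M[R]_(p, q)) (c0 : R) L :
  c x @[x --> F] --> c0 -> mxlim F f L -> mxlim F (fun x => c x *: f x) (c0 *: L).
Proof.
move=> hc hf i j; rewrite mxE.
under eq_cvg do rewrite mxE.
exact: cvgM.
Qed.

Lemma mxlim_sum (R : realType) T (F : set_system T) (FF : Filter F) p q
  (I : Type) (r : seq I) (P : pred I) (f : I -> T -> 'M[R]_(p, q)) L :
  (forall l, P l -> mxlim F (f l) (L l)) ->
  mxlim F (fun x => \sum_(l <- r | P l) f l x) (\sum_(l <- r | P l) L l).
Proof.
move=> h i j; rewrite summxE.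
under eq_cvg do rewrite summxE.
apply: cvg_sumR => l Pl; exact: h.
Qed.

Lemma det_lim (R : realType) T (F : set_system T) (FF : Filter F) n
  (f : T -> 'M[R]_n) L : mxlim F f L -> \det (f x) @[x --> F] --> \det L.
Proof.
move=> h; rewrite /determinant.
under eq_cvg do rewrite /determinant.
apply: cvg_sumR => s _; apply: cvgM; first exact: cvg_cst.
apply: cvg_prodR => i _; exact: h.
Qed.

Lemma mxlim_adj (R : realType) T (F : set_system T) (FF : Filter F) n
  (f : T -> 'M[R]_n) L : mxlim F f L -> mxlim F (fun x => \adj (f x)) (\adj L).
Proof.
move=> h i j; rewrite mxE /cofactor.
under eq_cvg do rewrite mxE /cofactor.
apply: cvgM; first exact: cvg_cst.
apply: det_lim => u v; rewrite !mxE.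
under eq_cvg do rewrite !mxE.
exact: h.
Qed.

Lemma mxlim_inv (R : realType) T (F : set_system T) (FF : Filter F) n
  (f : T -> 'M[R]_n) L : L \in unitmx -> mxlim F f L ->
  mxlim F (fun x => invmx (f x)) (invmx L).
Proof.
move=> Lu h.
have dL : \det L != 0 by rewrite -unitfE -unitmxE.
have hd := det_lim FF h.
have ev : \forall x \near F, f x \in unitmx.
  have dL0 : 0 < `|\det L| by rewrite normr_gt0.
  have := @cvgr_dist_lt _ _ _ F FF _ _ hd _ dL0.
  apply: filterS => x hx; rewrite unitmxE unitfE.
  apply/negP => /eqP d0; move: hx; rewrite d0 subr0 ltxx //.
move=> i j.
have hg : mxlim F (fun x => (\det (f x))^-1 *: \adj (f x)) (invmx L).
  rewrite /invmx Lu.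
  apply: mxlim_scale; last exact: mxlim_adj.
  exact: cvgV.
apply: (cvg_trans _ (hg i j)).
apply: near_eq_cvg; apply: filterS ev => x xu.
by rewrite /invmx xu.
Qed.

Definition bf (R : realType) d (S : 'M[R]_d) (x y : 'cV[R]_d) : R :=
  (x^T *m S *m y) 0 0.

Lemma bfDl (R : realType) d (S : 'M[R]_d) x1 x2 y :
  bf S (x1 + x2) y = bf S x1 y + bf S x2 y.
Proof. by rewrite /bf linearD /= !mulmxDl mxE. Qed.

Lemma bfDr (R : realType) d (S : 'M[R]_d) x y1 y2 :
  bf S x (y1 + y2) = bf S x y1 + bf S x y2.
Proof. by rewrite /bf !mulmxDr mxE. Qed.

Lemma bfZl (R : realType) d (S : 'M[R]_d) (c : R) x y :
  bf S (c *: x) y = c * bf S x y.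
Proof. by rewrite /bf linearZ /= -!scalemxAl mxE. Qed.

Lemma bfZr (R : realType) d (S : 'M[R]_d) (c : R) x y :
  bf S x (c *: y) = c * bf S x y.
Proof. by rewrite /bf -!scalemxAr mxE. Qed.

Lemma bfNl (R : realType) d (S : 'M[R]_d) x y : bf S (- x) y = - bf S x y.
Proof. by rewrite -scaleN1r bfZl mulN1r. Qed.

Lemma bfNr (R : realType) d (S : 'M[R]_d) x y : bf S x (- y) = - bf S x y.
Proof. by rewrite -scaleN1r bfZr mulN1r. Qed.

Lemma bfBl (R : realType) d (S : 'M[R]_d) x1 x2 y :
  bf S (x1 - x2) y = bf S x1 y - bf S x2 y.
Proof. by rewrite bfDl bfNl. Qed.

Lemma bfBr (R : realType) d (S : 'M[R]_d) x y1 y2 :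
  bf S x (y1 - y2) = bf S x y1 - bf S x y2.
Proof. by rewrite bfDr bfNr. Qed.

Lemma bf_sym (R : realType) d (S : 'M[R]_d) x y : S^T = S -> bf S x y = bf S y x.
Proof.
move=> sS; rewrite /bf.
have -> : (x^T *m S *m y) 0 0 = ((x^T *m S *m y)^T) 0 0 by rewrite [RHS]mxE.
by rewrite !trmx_mul trmxK sS mulmxA.
Qed.

Lemma bf_invmx (R : realType) d (S : 'M[R]_d) w : S^T = S -> S \in unitmx ->
  bf (invmx S) w w = bf S (invmx S *m w) (invmx S *m w).
Proof.
move=> sS uS; rewrite /bf trmx_mul trmx_inv sS.
congr (_ 0 0).
rewrite -!mulmxA; congr (_ *m _).
by rewrite [S *m (_ *m _)]mulmxA mulmxV // mul1mx.
Qed.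

Lemma dot_invmx (R : realType) d (S : 'M[R]_d) z w : S \in unitmx ->
  (z^T *m w) 0 0 = bf S z (invmx S *m w).
Proof.
by move=> uS; rewrite /bf -mulmxA [S *m _]mulmxA mulmxV // mul1mx.
Qed.

Lemma sq_bound (R : realType) d (S : 'M[R]_d) (nu : R) (z w : 'cV[R]_d) :
  S^T = S -> S \in unitmx -> (forall u, 0 <= bf S u u) ->
  0 <= nu -> (nu = 0 -> z = 0) ->
  2 * (z^T *m w) 0 0 - nu * bf (invmx S) w w <= bf S z z / nu.
Proof.
move=> sS uS psd nu0 hz.
have [e0|nupos] := eqVneq nu 0.
  rewrite (hz e0) e0 trmx0 mul0mx mxE mul0r invr0 !mulr0 subr0 //.
have nup : 0 < nu by rewrite lt0r nupos.
rewrite bf_invmx // (dot_invmx z w uS).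
set v := invmx S *m w.
have h := psd (z - nu *: v).
rewrite !bfBl !bfBr !bfZl !bfZr (bf_sym v z sS) in h.
rewrite ler_pdivlMr //.
set Q := bf S z z in h *; set b := bf S z v in h *; set q := bf S v v in h *.
nra.
Qed.

Definition Smx (R : realType) k (A : 'M[R]_k) (J : {set 'I_k}) :=
  coordproj R J *m A *m (coordproj R J)^T.

Lemma PPt (R : realType) k (J : {set 'I_k}) :
  coordproj R J *m (coordproj R J)^T = 1%:M.
Proof.
apply/matrixP => r s; rewrite !mxE.
rewrite (bigD1 (enum_val r)) //= big1 => [|j /negbTE jr]; last first.
  by rewrite !mxE jr mul0r.
rewrite !mxE eqxx mul1r addr0.
have [->|rs] := eqVneq r s; first by rewrite !eqxx.
case: eqP => // /enum_val_inj e; by rewrite e eqxx in rs.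
Qed.

Lemma S_sym (R : realType) k (A : 'M[R]_k) J : A^T = A -> (Smx A J)^T = Smx A J.
Proof. by move=> sA; rewrite /Smx !trmx_mul trmxK sA mulmxA. Qed.

Lemma S_pd (R : realType) k (A : 'M[R]_k) J : spd A ->
  forall x, x != 0 -> 0 < bf (Smx A J) x x.
Proof.
move=> [_ pA] x x0.
have : (coordproj R J)^T *m x != 0.
  apply: contra x0 => /eqP h.
  by rewrite -[x]mul1mx -(PPt R J) -mulmxA h mulmx0.
move=> /pA; rewrite /bf /Smx trmx_mul trmxK !mulmxA //.
Qed.

Lemma pd_unit (R : realType) d (S : 'M[R]_d) :
  (forall x, x != 0 -> 0 < bf S x x) -> S \in unitmx.
Proof.
move=> pS; rewrite unitmxE unitfE; apply/negP => /det0P [v v0 vS].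
have : v^T != 0 by rewrite trmx_eq0.
move=> /pS; rewrite /bf trmxK vS mul0mx mxE ltxx //.
Qed.

Lemma inv_psd (R : realType) d (S : 'M[R]_d) : S^T = S -> S \in unitmx ->
  (forall x, 0 <= bf S x x) -> forall w, 0 <= bf (invmx S) w w.
Proof. by move=> sS uS pS w; rewrite bf_invmx. Qed.

Lemma Msum_bf (R : realType) k n (I : 'I_n -> {set 'I_k}) nu (A : 'M[R]_k) x y :
  bf (Msum I nu A) x y =
  \sum_i nu 0 i * bf (invmx (Smx A (I i))) (coordproj R (I i) *m x)
                                           (coordproj R (I i) *m y).
Proof.
rewrite /bf /Msum mulmx_sumr mulmx_suml summxE; apply: eq_bigr => i _.
rewrite -scalemxAr -scalemxAl mxE; congr (_ * _).
by rewrite /Adag trmx_mul !mulmxA.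
Qed.

Lemma Msum_sym (R : realType) k n (I : 'I_n -> {set 'I_k}) nu (A : 'M[R]_k) :
  A^T = A -> (Msum I nu A)^T = Msum I nu A.
Proof.
move=> sA; rewrite /Msum linear_sum; apply: eq_bigr => i _.
rewrite linearZ /=; congr (_ *: _).
rewrite /Adag !trmx_mul trmxK trmx_inv.
have -> : (coordproj R (I i) *m A *m (coordproj R (I i))^T)^T
   = coordproj R (I i) *m A *m (coordproj R (I i))^T by exact: S_sym.
by rewrite mulmxA.
Qed.

Lemma Msum_psd (R : realType) k n (I : 'I_n -> {set 'I_k}) (nu : 'rV[R]_n) (A : 'M[R]_k) :
  spd A -> (forall i, 0 <= nu 0 i) -> forall x, 0 <= bf (Msum I nu A) x x.
Proof.
move=> hA nu0 x; rewrite Msum_bf; apply: sumr_ge0 => i _.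
apply: mulr_ge0 => //; apply: inv_psd.
- by apply: S_sym; case: hA.
- by apply: pd_unit; exact: S_pd.
- move=> y; have [->|y0] := eqVneq y 0; first by rewrite /bf mulmx0 mxE.
  by apply: ltW; apply: S_pd.
Qed.

Definition phi (R : realType) k n (I : 'I_n -> {set 'I_k}) (a : 'cV[R]_k)
  (nu : 'rV[R]_n) (A : 'M[R]_k) (x : 'cV[R]_k) : R :=
  2 * (a^T *m x) 0 0 - bf (Msum I nu A) x x.

Lemma phi_le_D (R : realType) k n (I : 'I_n -> {set 'I_k}) (a : 'cV[R]_k)
  (nu : 'rV[R]_n) (A : 'M[R]_k) (z : forall i, 'cV[R]_#|I i|) x :
  spd A -> (forall i, 0 <= nu 0 i) ->
  a = \sum_i (coordproj R (I i))^T *m z i ->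
  (forall i, nu 0 i = 0 -> z i = 0) ->
  phi I a nu A x <= \sum_i bf (Smx A (I i)) (z i) (z i) / nu 0 i.
Proof.
move=> hA nu0 ha hz.
rewrite /phi Msum_bf ha linear_sum /= mulmx_suml summxE mulr_sumr -sumrB.
apply: ler_sum => i _.
rewrite trmx_mul trmxK -mulmxA.
apply: sq_bound => //.
- by apply: S_sym; case: hA.
- by apply: pd_unit; exact: S_pd.
- move=> y; have [->|y0] := eqVneq y 0; first by rewrite /bf mulmx0 mxE.
  by apply: ltW; apply: S_pd.
- exact: hz.
Qed.

Lemma rowfree_BBt_unit (R : realType) r k (B : 'M[R]_(r, k)) :
  row_free B -> B *m B^T \in unitmx.
Proof.
move=> fB; rewrite unitmxE unitfE; apply/negP => /det0P [v v0 vB].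
have h : (v *m B) *m (v *m B)^T = 0 by rewrite trmx_mul !mulmxA -(mulmxA v) vB mul0mx.
have : v *m B == 0.
  apply/eqP/matrixP => i j; rewrite [in RHS]mxE (ord1 i).
  have hs : ((v *m B) *m (v *m B)^T) 0 0 = 0 by rewrite h mxE.
  rewrite mxE in hs.
  have hnn : forall l : 'I_k, true -> 0 <= (v *m B) 0 l * (v *m B)^T l 0.
    by move=> l _; rewrite [X in _ * X]mxE -expr2 sqr_ge0.
  have := psumr_eq0P hnn hs (i := j) erefl.
  by rewrite [X in _ * X]mxE -expr2 => /eqP; rewrite sqrf_eq0 => /eqP.
by rewrite mulmx_free_eq0 // (negbTE v0).
Qed.

Lemma mp_exists (R : realType) k (M : 'M[R]_k) : M^T = M -> exists X, penrose M X.
Proof.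
move=> sM.
have [B [fB sMB]] : exists B : 'M[R]_(\rank M, k), row_free B /\ (M <= B)%MS.
  by exists (row_base M); split; [exact: row_base_free | rewrite eq_row_base].
move: B fB sMB; set r := \rank M => B fB sMB.
have uBB : B *m B^T \in unitmx by exact: rowfree_BBt_unit.
have [H [eH1 eH2 HT]] : exists H : 'M[R]_r,
    [/\ B *m B^T *m H = 1%:M, H *m (B *m B^T) = 1%:M & H^T = H].
  exists (invmx (B *m B^T)); split; [exact: mulmxV | exact: mulVmx |].
  by rewrite trmx_inv trmx_mul trmxK.
have hl1 : forall p (Y : 'M[R]_(p, r)), Y *m B *m B^T *m H = Y.
  by move=> p Y; rewrite -(mulmxA Y) -mulmxA eH1 mulmx1.
have hl2 : forall p (Y : 'M[R]_(p, r)), Y *m H *m B *m B^T = Y.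
  by move=> p Y; rewrite -(mulmxA (Y *m H)) -mulmxA eH2 mulmx1.
have [D hD] : exists D, M = D *m B by apply/submxP.
have [E eE] : exists E, E = B^T *m H *m B by eexists.
have ET : E^T = E by rewrite eE !trmx_mul trmxK HT mulmxA.
have ME : M *m E = M by rewrite {1}hD eE !mulmxA hl1 -hD.
have EM : E *m M = M by rewrite -[E *m M]trmxK trmx_mul sM ET ME sM.
have [G eG] : exists G, G = H *m B *m M *m B^T *m H by eexists.
have MG : M = B^T *m G *m B.
  have -> : B^T *m G *m B = E *m M *m E by rewrite eG eE !mulmxA.
  by rewrite EM ME.
have fG : row_free G.
  rewrite -row_leq_rank.
  have h1 := mxrankM_maxl (B^T *m G) B.
  have h2 := mxrankM_maxr B^T G.
  rewrite -MG -/r in h1.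
  exact: leq_trans h1 h2.
have uG : G \in unitmx by rewrite -row_free_unit.
have hl3 : forall p (Y : 'M[R]_(p, r)), Y *m G *m invmx G = Y.
  by move=> p Y; rewrite -mulmxA mulmxV // mulmx1.
have hl4 : forall p (Y : 'M[R]_(p, r)), Y *m invmx G *m G = Y.
  by move=> p Y; rewrite -mulmxA mulVmx // mulmx1.
exists (B^T *m H *m invmx G *m H *m B).
have MX : M *m (B^T *m H *m invmx G *m H *m B) = E.
  by rewrite [in LHS]MG eE !mulmxA hl1 hl3.
have XM : (B^T *m H *m invmx G *m H *m B) *m M = E.
  by rewrite [in LHS]MG eE !mulmxA hl2 hl4.
split.
- by rewrite MX EM.
- by rewrite XM eE !mulmxA hl2.
- by rewrite MX ET.
- by rewrite XM ET.
Qed.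

Lemma phi_le_fin (R : realType) k n (I : 'I_n -> {set 'I_k}) (a : 'cV[R]_k)
  (nu : 'rV[R]_n) (A : 'M[R]_k) y x :
  spd A -> (forall i, 0 <= nu 0 i) -> Msum I nu A *m y = a ->
  phi I a nu A x <= bf (Msum I nu A) y y.
Proof.
move=> hA nu0 hy.
have sM := Msum_sym I nu (proj1 hA).
have h := Msum_psd I hA nu0 (x - y).
rewrite !bfBl !bfBr (bf_sym x y sM) in h.
rewrite /phi.
have -> : (a^T *m x) 0 0 = bf (Msum I nu A) y x.
  by rewrite -hy trmx_mul sM /bf.
lra.
Qed.

Lemma phi_self (R : realType) k n (I : 'I_n -> {set 'I_k}) (a : 'cV[R]_k)
  (nu : 'rV[R]_n) (A : 'M[R]_k) y :
  A^T = A -> Msum I nu A *m y = a -> phi I a nu A y = bf (Msum I nu A) y y.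
Proof.
move=> sA hy.
have sM := Msum_sym I nu sA.
rewrite /phi.
have -> : (a^T *m y) 0 0 = bf (Msum I nu A) y y.
  by rewrite -hy trmx_mul sM /bf.
lra.
Qed.

Lemma Fobj_fin (R : realType) k n (I : 'I_n -> {set 'I_k}) (a : 'cV[R]_k)
  (nu : 'rV[R]_n) (A : 'M[R]_k) y :
  A^T = A -> Msum I nu A *m y = a ->
  Fobj I a nu A = (bf (Msum I nu A) y y)%:E.
Proof.
move=> sA hy; rewrite /Fobj /= asboolT; last by exists y.
have sM := Msum_sym I nu sA.
congr (_%:E).
rewrite /mp_pinv.
case: xgetP => [X -> [h1 _ _ _]|hn]; last first.
  by have [X hX] := mp_exists sM; have := hn X; rewrite /= => /(_ hX).
rewrite -hy trmx_mul sM /bf.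
rewrite !mulmxA; set X' := xget _ _ in h1 *.
by rewrite -(mulmxA (y^T) _ X') -(mulmxA (y^T) (_ *m X')) h1.
Qed.

Lemma range_or_kernel (R : realType) k (M : 'M[R]_k) (a : 'cV[R]_k) :
  M^T = M -> ~ (exists y, M *m y = a) ->
  exists x0 : 'cV[R]_k, M *m x0 = 0 /\ (a^T *m x0) 0 0 != 0.
Proof.
move=> sM ny.
have na : ~~ (a^T <= M)%MS.
  apply/negP => /submxP [D hD]; apply: ny; exists D^T.
  by rewrite -[M]sM -trmx_mul -hD trmxK.
rewrite submxE in na.
have [j hj] : exists j, (a^T *m cokermx M) 0 j != 0.
  apply/existsP; apply: contraR na => /existsPn h.
  apply/eqP/matrixP => i j; rewrite (ord1 i) [RHS]mxE.
  by have := h j; rewrite negbK => /eqP ->.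
exists (cokermx M *m delta_mx j 0); split.
  by rewrite mulmxA mulmx_coker mul0mx.
by rewrite mulmxA -colE mxE.
Qed.

Lemma phi_scale_ker (R : realType) k n (I : 'I_n -> {set 'I_k}) (a : 'cV[R]_k)
  (nu : 'rV[R]_n) (A : 'M[R]_k) x0 (t : R) :
  Msum I nu A *m x0 = 0 ->
  phi I a nu A (t *: x0) = 2 * t * (a^T *m x0) 0 0.
Proof.
move=> h; rewrite /phi bfZl bfZr.
have -> : bf (Msum I nu A) x0 x0 = 0 by rewrite /bf -mulmxA h mulmx0 mxE.
by rewrite -scalemxAr mxE !mulr0 subr0 mulrA.
Qed.

Lemma phi_unbounded (R : realType) k n (I : 'I_n -> {set 'I_k}) (a : 'cV[R]_k)
  (nu : 'rV[R]_n) (A : 'M[R]_k) (r : R) :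
  A^T = A -> ~ (exists y, Msum I nu A *m y = a) ->
  exists x, r < phi I a nu A x.
Proof.
move=> sA ny.
have [x0 [h0 hs]] := range_or_kernel (Msum_sym I nu sA) ny.
set s := (a^T *m x0) 0 0 in hs.
exists (((`|r| + 1) / (2 * s)) *: x0); rewrite phi_scale_ker // -/s.
have -> : 2 * ((`|r| + 1) / (2 * s)) * s = `|r| + 1.
  by field; rewrite hs.
have := ler_norm r; lra.
Qed.

Lemma Fobj_char1 (R : realType) k n (I : 'I_n -> {set 'I_k}) (a : 'cV[R]_k)
  (nu : 'rV[R]_n) (A : 'M[R]_k) (r : R) :
  A^T = A -> (r%:E < Fobj I a nu A)%E -> exists x, r < phi I a nu A x.
Proof.
move=> sA.
have [[y hy]|ny] := pselect (exists y, Msum I nu A *m y = a).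
  rewrite (Fobj_fin sA hy) lte_fin => h; exists y; by rewrite phi_self.
by move=> _; exact: phi_unbounded.
Qed.

Lemma Fobj_char2 (R : realType) k n (I : 'I_n -> {set 'I_k}) (a : 'cV[R]_k)
  (nu : 'rV[R]_n) (A : 'M[R]_k) (r : R) :
  A^T = A -> (forall x, phi I a nu A x <= r) -> (Fobj I a nu A <= r%:E)%E.
Proof.
move=> sA h.
have [[y hy]|ny] := pselect (exists y, Msum I nu A *m y = a).
  by rewrite (Fobj_fin sA hy) lee_fin -(phi_self sA hy).
have [x hx] := phi_unbounded r sA ny.
by have := h x; rewrite leNgt hx.
Qed.

Lemma Fobj_ge_phi (R : realType) k n (I : 'I_n -> {set 'I_k}) (a : 'cV[R]_k)
  (nu : 'rV[R]_n) (A : 'M[R]_k) x :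
  spd A -> (forall i, 0 <= nu 0 i) -> ((phi I a nu A x)%:E <= Fobj I a nu A)%E.
Proof.
move=> hA nu0.
have [[y hy]|ny] := pselect (exists y, Msum I nu A *m y = a).
  by rewrite (Fobj_fin (proj1 hA) hy) lee_fin; exact: phi_le_fin.
by rewrite /Fobj /= asboolF // leey.
Qed.

Lemma mxlim_of_cvg (R : realType) T (F : set_system T) (FF : Filter F) p q
  (f : T -> 'M[R]_(p, q)) L : f x @[x --> F] --> L -> mxlim F f L.
Proof.
move=> h i j.
exact: (cvg_comp f (fun M : 'M[R]_(p, q) => M i j) h (@coord_continuous R p q i j L)).
Qed.

Lemma bf_lim (R : realType) T (F : set_system T) (FF : Filter F) d
  (f : T -> 'M[R]_d) L (z : 'cV[R]_d) :
  mxlim F f L -> bf (f x) z z @[x --> F] --> bf L z z.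
Proof.
move=> h; rewrite /bf.
have h1 := mxlim_mul FF (mxlim_cst (L := z^T) FF) h.
have h2 : mxlim F _ _ := mxlim_mul FF h1 (mxlim_cst (L := z) FF).
exact: h2 0 0.
Qed.

Lemma S_lim (R : realType) T (F : set_system T) (FF : Filter F) k
  (f : T -> 'M[R]_k) L (J : {set 'I_k}) :
  mxlim F f L -> mxlim F (fun x => Smx (f x) J) (Smx L J).
Proof.
move=> h; rewrite /Smx.
have h1 := mxlim_mul FF (mxlim_cst (L := coordproj R J) FF) h.
exact: (mxlim_mul FF h1 (mxlim_cst (L := (coordproj R J)^T) FF)).
Qed.

Lemma phi_cont (R : realType) k n (I : 'I_n -> {set 'I_k}) (a : 'cV[R]_k)
  (nu : 'rV[R]_n) (A : 'M[R]_k) x : spd A ->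
  phi I a p.1 p.2 x @[p --> filter_prod (nbhs nu) (nbhs A)] --> phi I a nu A x.
Proof.
move=> hA.
have FF : Filter (filter_prod (nbhs nu) (nbhs A)).
  by apply: filter_prod_filter; exact: nbhs_filter.
rewrite /phi.
under eq_cvg do rewrite Msum_bf.
rewrite Msum_bf.
apply: cvgB; first exact: cvg_cst.
apply: cvg_sumR => i _; apply: cvgM.
  exact: (mxlim_of_cvg FF (@cvg_fst _ _ (nbhs nu) (nbhs A) _)).
apply: bf_lim; apply: mxlim_inv.
  by apply: pd_unit; exact: S_pd.
apply: S_lim; exact: (mxlim_of_cvg FF (@cvg_snd _ _ (nbhs nu) (nbhs A) _)).
Qed.

Lemma D_cont (R : realType) k n (I : 'I_n -> {set 'I_k}) (nu : 'rV[R]_n)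
  (A : 'M[R]_k) (z : forall i, 'cV[R]_#|I i|) :
  \sum_i bf (Smx A' (I i)) (z i) (z i) / nu 0 i @[A' --> A] -->
  \sum_i bf (Smx A (I i)) (z i) (z i) / nu 0 i.
Proof.
have FF := nbhs_filter A.
apply: (cvg_sumR FF) => i _; apply: cvgM; last exact: cvg_cst.
apply: (bf_lim FF); apply: (S_lim FF).
apply: (mxlim_of_cvg FF); exact: cvg_id.
Qed.

Lemma Kset_sumE (R : realType) m n (c : 'I_n -> 'cV[R]_m) (nu : 'rV[R]_n) j :
  (\sum_(i < n) nu 0 i *: c i) j 0 = \sum_(i < n) nu 0 i * c i j 0.
Proof. by rewrite summxE; apply: eq_bigr => i _; rewrite mxE. Qed.

Lemma Kset_closed (R : realType) m n (c : 'I_n -> 'cV[R]_m) (B0 : 'cV[R]_m) :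
  closed (Kset c B0).
Proof.
have -> : Kset c B0 =
   (\bigcap_(i in [set: 'I_n]) ((fun nu : 'rV[R]_n => nu 0 i) @^-1` [set x | 0 <= x]))
   `&` (\bigcap_(j in [set: 'I_m])
         ((fun nu : 'rV[R]_n => \sum_(i < n) nu 0 i * c i j 0) @^-1` [set x | x <= B0 j 0])).
  apply/seteqP; split => nu /=.
    by move=> [h1 h2]; split => i _ /=; [exact: h1 | rewrite -Kset_sumE; exact: h2].
  by move=> [h1 h2]; split => i; [exact: h1 | rewrite Kset_sumE; exact: h2].
apply: closedI; apply: closed_bigI => i _; apply: preimage_closed.
- move=> x _; exact: coord_continuous.
- exact: closed_ge.
- move=> x _; apply: (cvg_sumR (nbhs_filter x)) => l _.
  apply: cvgM; last exact: cvg_cst.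
  exact: coord_continuous.
- exact: closed_le.
Qed.

Lemma Kset_bounded (R : realType) m n (c : 'I_n -> 'cV[R]_m) (B0 : 'cV[R]_m)
  (c_ge0 : forall i j, 0 <= c i j 0) (c_pos : forall i, exists j, 0 < c i j 0)
  (B0_pos : forall j, 0 < B0 j 0) :
  bounded_set (Kset c B0).
Proof.
set Bd := \sum_(i < n) \sum_(j < m) B0 j 0 / c i j 0.
have tge0 : forall i j, 0 <= B0 j 0 / c i j 0.
  by move=> i j; apply: divr_ge0; [exact: ltW | exact: c_ge0].
have Bd0 : 0 <= Bd by apply: sumr_ge0 => i _; apply: sumr_ge0 => j _.
have hb : forall nu, Kset c B0 nu -> forall i, nu 0 i <= Bd.
  move=> nu [h1 h2] i.
  have [j cj] := c_pos i.
  have e1 : nu 0 i * c i j 0 <= B0 j 0.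
    apply: le_trans (h2 j); rewrite Kset_sumE (bigD1 i) //= lerDl.
    by apply: sumr_ge0 => l _; apply: mulr_ge0.
  have e2 : nu 0 i <= B0 j 0 / c i j 0 by rewrite ler_pdivlMr.
  apply: (le_trans e2).
  apply: (@le_trans _ _ (\sum_(j0 < m) B0 j0 0 / c i j0 0)).
    by rewrite (bigD1 j) //= lerDl; apply: sumr_ge0.
  by rewrite /Bd (bigD1 i) //= lerDl; apply: sumr_ge0 => l _; apply: sumr_ge0.
rewrite /bounded_near.
apply: filterS (nbhs_pinfty_ge (num_real Bd)) => M BdM nu Knu.
apply: le_trans BdM.
rewrite [leLHS]/Num.norm /= mx_normrE.
apply: bigmax_le => // -[i j] _ /=.
rewrite (ord1 i) ger0_norm; [exact: hb | by case: Knu => + _; apply].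
Qed.

Lemma local_sep (R : realType) k m n (I : 'I_n -> {set 'I_k}) (a : 'cV[R]_k)
  (c : 'I_n -> 'cV[R]_m) (B0 : 'cV[R]_m) (A : 'M[R]_k) (nu : 'rV[R]_n) :
  spd A -> Kset c B0 nu -> ~ nustar I a c B0 A nu ->
  filter_prod (nbhs nu) (nbhs A)
    (fun p => spd p.2 -> ~ nustar I a c B0 p.2 p.1).
Proof.
move=> hA Knu nnu.
have [nu' [Knu' hlt]] : exists nu', Kset c B0 nu' /\ (Fobj I a nu' A < Fobj I a nu A)%E.
  apply: contrapT => hn; apply: nnu; split => // nu' Knu'.
  rewrite leNgt; apply/negP => h; apply: hn; by exists nu'.
have nu'0 := proj1 Knu'.
have [[y hy]|ny] := pselect (exists y, Msum I nu' A *m y = a); last first.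
  by move: hlt; rewrite /Fobj /= asboolF // ltNge leey.
rewrite (Fobj_fin (proj1 hA) hy) in hlt.
set v' := bf (Msum I nu' A) y y in hlt.
have [r [vr rF]] : exists r, v' < r /\ (r%:E < Fobj I a nu A)%E.
  move: hlt; case: (Fobj I a nu A) => [v| |] h.
  - exists ((v' + v) / 2); rewrite lte_fin in h; rewrite lte_fin; split; lra.
  - exists (v' + 1); split; [lra | exact: ltry].
  - by move: h; rewrite ltNge leNye.
have [x hx] := Fobj_char1 (proj1 hA) rF.
pose z := fun i => nu' 0 i *: (invmx (Smx A (I i)) *m (coordproj R (I i) *m y)).
have ha : a = \sum_i (coordproj R (I i))^T *m z i.
  rewrite -hy /Msum mulmx_suml; apply: eq_bigr => i _.
  by rewrite /z -scalemxAr -scalemxAl /Adag /Smx !mulmxA.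
have hz : forall i, nu' 0 i = 0 -> z i = 0 by move=> i e; rewrite /z e scale0r.
have hD : \sum_i bf (Smx A (I i)) (z i) (z i) / nu' 0 i = v'.
  rewrite /v' Msum_bf; apply: eq_bigr => i _.
  rewrite /z bfZl bfZr -bf_invmx; last first.
  - by apply: pd_unit; exact: S_pd.
  - by apply: S_sym; case: hA.
  have [e|ne] := eqVneq (nu' 0 i) 0; first by rewrite e !mul0r.
  by field.
have FF : Filter (filter_prod (nbhs nu) (nbhs A)).
  by apply: filter_prod_filter; exact: nbhs_filter.
have n1 := @cvgr_gt _ _ _ FF _ _ (phi_cont (I:=I) (a:=a) (x:=x) hA) r hx.
have := @cvgr_lt _ _ _ (nbhs_filter A) _ _ (D_cont (I:=I) (nu:=nu') (A:=A) (z:=z)) r; rewrite hD => /(_ vr) n2.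
have n2' : filter_prod (nbhs nu) (nbhs A)
    (fun p => \sum_i bf (Smx p.2 (I i)) (z i) (z i) / nu' 0 i < r).
  exists (setT, [set A' | \sum_i bf (Smx A' (I i)) (z i) (z i) / nu' 0 i < r]).
    by split; [exact: filterT | exact: n2].
  by move=> [p1 p2] [_ h].
apply: filterS (filterI n1 n2') => -[nu'' A'] /= [h1 h2] sA' [Knu'' hmin].
have h3 := hmin nu' Knu'.
have Fle : (Fobj I a nu' A' <= r%:E)%E.
  apply: (Fobj_char2 (proj1 sA')) => x'.
  exact: (le_trans (phi_le_D x' sA' nu'0 ha hz) (ltW h2)).
have Fge := Fobj_ge_phi I a x sA' (proj1 Knu'').
have := le_trans Fge (le_trans h3 Fle).
by rewrite lee_fin leNgt h1.
Qed.

Unset Implicit Arguments.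

Lemma uhc (R : realType) (k m n : nat)
  (I : 'I_n -> {set 'I_k}) (a : 'cV[R]_k)
  (c : 'I_n -> 'cV[R]_m) (c_ge0 : forall i j, 0 <= c i j 0)
  (c_pos : forall i, exists j, 0 < c i j 0)
  (B0 : 'cV[R]_m) (B0_pos : forall j, 0 < B0 j 0) :
  (forall A : 'M[R]_k, spd A ->
     forall V : set 'rV[R]_n, open V -> nustar I a c B0 A `<=` V ->
     exists2 e : R, 0 < e &
       forall A' : 'M[R]_k, spd A' -> `|A' - A| < e ->
         nustar I a c B0 A' `<=` V).
Proof.
move=> A hA V oV sub.
have Kc : compact (Kset c B0).
  apply: bounded_closed_compact; first exact: Kset_bounded.
  exact: Kset_closed.
have Cc : compact (Kset c B0 `&` ~` V).
  apply: (subclosed_compact _ Kc); last exact: subIsetl.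
  apply: closedI; [exact: Kset_closed | exact: open_closedC].
have hcov : forall nu, (Kset c B0 `&` ~` V) nu ->
    filter_prod (nbhs nu) (nbhs A) (fun p => spd p.2 -> ~ nustar I a c B0 p.2 p.1).
  move=> nu [Knu nVnu]; apply: (local_sep hA Knu) => hs; apply: nVnu; exact: sub hs.
have h := (proj1 (compact_near_coveringP _) Cc) _ (nbhs A)
   (fun A' nu => spd A' -> ~ nustar I a c B0 A' nu) (nbhs_filter A) hcov.
pose C := Kset c B0 `&` ~` V.
have [e e0 he] : exists2 e : R, 0 < e & forall A' : 'M[R]_k, `|A - A'| < e ->
    forall nu, C nu -> spd A' -> ~ nustar I a c B0 A' nu.
  have h' : nbhs A (fun A' : 'M[R]_k => C `<=` (fun nu => spd A' -> ~ nustar I a c B0 A' nu)) := h.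
  move: h' => /nbhs_ballP [e e0 he]; exists e => // A' dA' nu Cnu.
  apply: (he A') => //.
  rewrite -ball_normE /=. exact: dA'.
exists e; first exact: e0.
move=> A' sA' dA' nu hnu.
apply: contrapT => nV.
have dA : `|A - A'| < e by rewrite distrC.
exact: (he A' dA nu (conj (proj1 hnu) nV) sA' hnu).
Qed.

Theorem lemmaE7 (R : realType) (k m n : nat)
  (I : 'I_n -> {set 'I_k}) (I_inj : injective I) (I_ne : forall i, I i != finset.set0)
  (a : 'cV[R]_k) (a_ne0 : a != 0)
  (a_supp : forall j : 'I_k, a j 0 != 0 -> exists i : 'I_n, j \in I i)
  (c : 'I_n -> 'cV[R]_m) (c_ge0 : forall i j, 0 <= c i j 0)
  (c_pos : forall i, exists j, 0 < c i j 0)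
  (B0 : 'cV[R]_m) (B0_pos : forall j, 0 < B0 j 0) :
  (* upper hemicontinuity of A |-> nu^*(A) on S^k_{++} *)
  (forall A : 'M[R]_k, spd A ->
     forall V : set 'rV[R]_n, open V -> nustar I a c B0 A `<=` V ->
     exists2 e : R, 0 < e &
       forall A' : 'M[R]_k, spd A' -> `|A' - A| < e ->
         nustar I a c B0 A' `<=` V)
  /\
  (* consequence *)
  (forall (Astar : 'M[R]_k) (nu0 : 'rV[R]_n) (A_ : nat -> 'M[R]_k),
     spd Astar -> nustar I a c B0 Astar = [set nu0] ->
     (forall N, spd (A_ N)) -> A_ @ \oo --> Astar ->
     forall eps : R, 0 < eps ->
       exists N0 : nat, forall N : nat, (N0 <= N)%N ->
         forall nu, nustar I a c B0 (A_ N) nu -> `|nu - nu0| < eps).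
Proof.
have H1 := @uhc R k m n I a c c_ge0 c_pos B0 B0_pos.
split; first exact: H1.
move=> As nu0 A_ hAs hstar hAN cvgA eps eps0.
have sub : nustar I a c B0 As `<=` ball nu0 eps.
  by move=> nu; rewrite hstar => ->; exact: ballxx.
have [e e0 he] := H1 As hAs (ball nu0 eps) (ball_open nu0 eps) sub.
have := @cvgr_dist_lt _ _ _ _ _ A_ As cvgA e e0.
move=> [N0 _ hN0]; exists N0 => N hN nu hnu.
have dN : `|A_ N - As| < e by rewrite distrC; exact: hN0.
have := he (A_ N) (hAN N) dN nu hnu.
rewrite -ball_normE /= distrC.
exact.
Qed.
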